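(* Let $K$ be a field, $\nu$ a valuation on $K[x]$, and $\mathbf{Q}\subseteq K[x]$ a set of nonconstant monic polynomials with the following properties: (1) $\nu_Q$ is a valuation on $K[x]$ for every $Q\in\mathbf{Q}$; (2) for every finite nonempty subset $\mathcal{F}\subseteq\mathbf{Q}$ there exists $Q\in\mathcal{F}$ such that $\nu_Q(Q')=\nu(Q')$ for every $Q'\in\mathcal{F}$; (3) for every $p\in K[x]$ there exist $a_1,\ldots,a_r\in K$ and $\lambda_1,\ldots,\lambda_r\in\mathbb{N}^{\mathbf{Q}}$ such that $p=\sum_{i=1}^r a_i\mathbf{Q}^{\lambda_i}$ with $\nu(a_i\mathbf{Q}^{\lambda_i})\geq\nu(p)$ for every $i$, and $\deg(Q)\leq\deg(p)$ for every $Q\in\mathbf{Q}$ with $\lambda_i(Q)\neq 0$ for some $i$. Then $\mathbf{Q}$ is a complete set for $\nu$.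
   Context: A valuation on a commutative ring $R$ is a map $\nu:R\to\Gamma\cup\{\infty\}$, $\Gamma$ an ordered abelian group, with $\nu(ab)=\nu(a)+\nu(b)$, $\nu(a+b)\geq\min\{\nu(a),\nu(b)\}$, $\nu(1)=0$, $\nu(0)=\infty$ (nonzero elements may have value $\infty$). For a nonconstant monic $q\in K[x]$ and $f\in K[x]$, the $q$-expansion of $f$ is the unique expression $f=f_0+f_1q+\cdots+f_nq^n$ with each $f_i=0$ or $\deg(f_i)<\deg(q)$; the $q$-truncation of $\nu$ is $\nu_q(f):=\min_{0\leq i\leq n}\nu(f_iq^i)$. A set $\mathbf{Q}$ of nonconstant monic polynomials in $K[x]$ is a complete set for $\nu$ if for every nonconstant $p\in K[x]$ there exists $q\in\mathbf{Q}$ with $\deg(q)\leq\deg(p)$ and $\nu(p)=\nu_q(p)$. $\mathbb{N}^{\mathbf{Q}}$ denotes the set of maps $\lambda:\mathbf{Q}\to\mathbb{N}$ with $\lambda(q)=0$ for all but finitely many $q$, and $\mathbf{Q}^\lambda:=\prod_{q\in\mathbf{Q}}q^{\lambda(q)}$. *)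

(* Defs.v *)
From HB Require Import structures.
From mathcomp Require Import all_boot all_order all_algebra.
Set Implicit Arguments. Unset Strict Implicit. Unset Printing Implicit Defensive.
Import Order.TTheory GRing.Theory Num.Theory.
Local Open Scope ring_scope.

Definition ordered_group (G : porderZmodType) : Prop :=
  (forall x y : G, (x <= y) || (y <= x)) /\
  (forall x y z : G, x <= y -> x + z <= y + z).

(* Gamma \cup {infinity}, encoded as option G with None = infinity. *)
Definition vle (G : porderZmodType) (a b : option G) : bool :=
  match a, b with
  | _, None => true
  | None, Some _ => false
  | Some x, Some y => x <= y
  end.

Definition vadd (G : porderZmodType) (a b : option G) : option G :=
  match a, b with
  | Some x, Some y => Some (x + y)
  | _, _ => None
  end.

Definition vmin (G : porderZmodType) (a b : option G) : option G :=
  if vle a b then a else b.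

(* A valuation on the commutative ring R (nonzero elements may have value
   infinity). *)
Definition valuation (R : comNzRingType) (G : porderZmodType)
    (nu : R -> option G) : Prop :=
  [/\ forall a b, nu (a * b) = vadd (nu a) (nu b),
      forall a b, vle (vmin (nu a) (nu b)) (nu (a + b)),
      nu 1 = Some 0 &
      nu 0 = None].

(* The i-th coefficient f_i of the q-expansion f = sum_i f_i q^i
   (deg f_i < deg q); for monic nonconstant q it is obtained by
   repeated Euclidean division. *)
Definition qcoef (K : fieldType) (q f : {poly K}) (i : nat) : {poly K} :=
  (f %/ q ^+ i) %% q.

(* Since deg q >= 1, the
   q-expansion of f has at most size f terms; the remaining coefficients
   vanish and contribute infinity, which does not affect the minimum. *)
Definition qtrunc (K : fieldType) (G : porderZmodType)
    (nu : {poly K} -> option G) (q : {poly K}) (f : {poly K}) : option G :=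
  foldr (@vmin G) None [seq nu (qcoef q f i * q ^+ i) | i <- iota 0 (size f)].

(* Q^lambda for lambda in N^Q, lambda represented as the finite multiset
   (sequence) m of elements of Q, each q occurring lambda(q) times. *)
Definition qmonomial (K : fieldType) (m : seq {poly K}) : {poly K} :=
  \prod_(q <- m) q.

Definition complete_set (K : fieldType) (G : porderZmodType)
    (nu : {poly K} -> option G) (Q : {poly K} -> Prop) : Prop :=
  forall p : {poly K}, (1 < size p)%N ->
    exists q, [/\ Q q, (size q <= size p)%N & nu p = qtrunc nu q p].

(* Main.v *)
Require Import Defs.
From HB Require Import structures.
From mathcomp Require Import all_boot all_order all_algebra.
From mathcomp Require Import ring.
Import Order.TTheory GRing.Theory Num.Theory.
Local Open Scope ring_scope.

Section Aux.
Variable G : porderZmodType.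

Lemma vle_trans (a b c : option G) : vle a b -> vle b c -> vle a c.
Proof.
case: a => [a|]; case: b => [b|]; case: c => [c|] //=; exact: le_trans.
Qed.

Lemma vle_anti (a b : option G) : vle a b -> vle b a -> a = b.
Proof.
case: a => [a|]; case: b => [b|] //= h1 h2; congr Some; apply/le_anti.
by rewrite h1 h2.
Qed.

Lemma vle_refl (a : option G) : vle a a.
Proof. by case: a => //= a; rewrite lexx. Qed.

Lemma vle_min (c a b : option G) : vle c a -> vle c b -> vle c (vmin a b).
Proof. by rewrite /vmin; case: (vle a b). Qed.

Lemma vmin_le (tot : forall x y : G, (x <= y) || (y <= x)) (a b : option G) :
  vle (vmin a b) a /\ vle (vmin a b) b.
Proof.
rewrite /vmin; case E: (vle a b); split => //; try exact: vle_refl.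
move: E; case: a => [a|]; case: b => [b|] //= E.
by move: (tot a b); rewrite E.
Qed.

Lemma foldr_le (tot : forall x y : G, (x <= y) || (y <= x)) (l : seq (option G)) x :
  x \in l -> vle (foldr (@vmin G) None l) x.
Proof.
elim: l => //= y l IH; rewrite inE => /orP [/eqP ->|/IH h].
  by case: (vmin_le tot y (foldr (@vmin G) None l)).
case: (vmin_le tot y (foldr (@vmin G) None l)) => _ h2; exact: vle_trans h2 h.
Qed.

Lemma le_foldr (l : seq (option G)) c :
  (forall x, x \in l -> vle c x) -> vle c (foldr (@vmin G) None l).
Proof.
elim: l => [|y l IH] h /=; first by case: c {h}.
apply: vle_min; first by apply: h; rewrite inE eqxx.
apply: IH => x hx; by apply: h; rewrite inE hx orbT.
Qed.

Lemma val_sum (R : comNzRingType) (w : R -> option G) (I : eqType) (s : seq I)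
  (F : I -> R) c :
  valuation w -> (forall i, i \in s -> vle c (w (F i))) ->
  vle c (w (\sum_(i <- s) F i)).
Proof.
case=> _ hD _ h0; elim: s => [|i s IH] h; first by rewrite big_nil h0; case: c {h}.
rewrite big_cons; apply: vle_trans (hD _ _).
apply: vle_min; first by apply: h; rewrite inE eqxx.
by apply: IH => j hj; apply: h; rewrite inE hj orbT.
Qed.
End Aux.

Lemma qexpand (K : fieldType) (q p : {poly K}) (n : nat) :
  p = \sum_(0 <= i < n) qcoef q p i * q ^+ i + (p %/ q ^+ n) * q ^+ n.
Proof.
elim: n => [|n IH]; first by rewrite big_geq // expr0 divp1 mulr1 add0r.
rewrite big_nat_recr //= {1}IH.
rewrite [in X in _ = _ + X]exprSr -divp_divl.
rewrite {1}(divp_eq (p %/ q ^+ n) q) /qcoef; ring.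
Qed.

Lemma qexpand_full (K : fieldType) (q p : {poly K}) : (1 < size q)%N ->
  p = \sum_(i <- iota 0 (size p)) (qcoef q p i * q ^+ i).
Proof.
move=> hq; rewrite {1}(@qexpand _ q p (size p)) divp_small ?mul0r ?addr0.
  by rewrite /index_iota subn0.
have hq0 : q != 0 by rewrite -size_poly_gt0; apply: ltn_trans hq.
have := size_exp q (size p).
have : (0 < size (q ^+ size p))%N by rewrite size_poly_gt0 expf_neq0.
case: (size (q ^+ size p)) => // m _ /= ->.
rewrite ltnS; apply: leq_pmull; by case: (size q) hq => // [[]].
Qed.

Lemma qtrunc_const (K : fieldType) (G : porderZmodType)
  (nu : {poly K} -> option G) (q : {poly K}) (c : K) : valuation nu -> (1 < size q)%N ->
  qtrunc nu q c%:P = nu c%:P.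
Proof.
move=> [_ _ _ h0] hq; rewrite /qtrunc.
have [->|cn0] := eqVneq c 0; first by rewrite polyC0 size_poly0 h0.
rewrite size_polyC cn0 /= /vmin /qcoef expr0 divp1 mulr1 modp_small ?size_polyC ?cn0 //.
by case: (nu c%:P).
Qed.
Lemma qtrunc_mono (K : fieldType) (G : porderZmodType)
  (nu : {poly K} -> option G) (q : {poly K}) (m : seq {poly K}) :
  valuation nu -> valuation (qtrunc nu q) ->
  (forall x, x \in m -> qtrunc nu q x = nu x) ->
  qtrunc nu q (qmonomial m) = nu (qmonomial m).
Proof.
move=> [hM _ h1 _] [hM' _ h1' _]; rewrite /qmonomial.
elim: m => [|x m IH] h; first by rewrite !big_nil h1 h1'.
rewrite !big_cons hM hM' h ?inE ?eqxx // IH // => y hy.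
by apply: h; rewrite inE hy orbT.
Qed.

Theorem mainTheorem2 (K : fieldType) (G : porderZmodType)
    (nu : {poly K} -> option G) (Q : {poly K} -> Prop) :
  ordered_group G ->
  valuation nu ->
  (forall q, Q q -> q \is monic /\ (1 < size q)%N) ->
  (* (1) *)
  (forall q, Q q -> valuation (qtrunc nu q)) ->
  (* (2) *)
  (forall F : seq {poly K}, F != [::] -> (forall q, q \in F -> Q q) ->
     exists2 q, q \in F & forall q', q' \in F -> qtrunc nu q q' = nu q') ->
  (* (3) *)
  (forall p : {poly K},
     exists terms : seq (K * seq {poly K}),
       [/\ p = \sum_(t <- terms) t.1%:P * qmonomial t.2,
           forall t, t \in terms -> forall q, q \in t.2 -> Q q,
           forall t, t \in terms -> vle (nu p) (nu (t.1%:P * qmonomial t.2)) &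
           forall t, t \in terms -> forall q, q \in t.2 -> (size q <= size p)%N]) ->
  complete_set nu Q.
Proof.
move=> [tot _] hnu hQ h1 h2 h3 p hp.
have [terms [hp_eq hterQ hterv hters]] := h3 p.
set F := flatten [seq t.2 | t <- terms].
have FQ : forall q, q \in F -> Q q.
  by move=> q /flatten_mapP [t ht qt]; exact: hterQ t ht q qt.
have F0 : F != [::].
  apply/negP => /eqP F0.
  have : p = (\sum_(t <- terms) t.1)%:P.
    rewrite hp_eq rmorph_sum; apply: eq_big_seq => t ht /=.
    case E: t.2 => [|x m]; first by rewrite /qmonomial big_nil mulr1.
    have : x \in F by apply/flatten_mapP; exists t => //; rewrite E inE eqxx.
    by rewrite F0.
  move=> hpc; move: hp; rewrite hpc.
  by move: (size_polyC_leq1 (\sum_(t <- terms) t.1)); case: (size _) => // [[]].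
have [q qF hqF] := h2 F F0 FQ.
have [t ht qt] := flatten_mapP qF.
have [_ hq] := hQ q (FQ q qF).
have hvq := h1 q (FQ q qF).
exists q; split => //; first exact: (FQ q qF).
  exact: hters t ht q qt.
apply: vle_anti.
- have -> : qtrunc nu q p = qtrunc nu q (\sum_(t <- terms) t.1%:P * qmonomial t.2)
    by rewrite -hp_eq.
  apply: (@val_sum _ _ _ _ terms (fun t => (t.1)%:P * qmonomial t.2) _ hvq) => t' ht'.
  case: (hvq) => hM' _ _ _; case: (hnu) => hM _ _ _.
  rewrite hM' qtrunc_const // qtrunc_mono // -?hM; first exact: hterv.
  move=> x hx; apply: hqF; apply/flatten_mapP; by exists t'.
- have -> : nu p = nu (\sum_(i <- iota 0 (size p)) (qcoef q p i * q ^+ i))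
    by rewrite -qexpand_full.
  apply: (@val_sum _ _ _ _ (iota 0 (size p)) (fun i => qcoef q p i * q ^+ i) _ hnu) => i hi; rewrite /qtrunc; apply: foldr_le => //.
  by apply/mapP; exists i.
Qed.
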